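(* Under the standing assumptions below, let $\eta>0$. If $x$ is sufficiently large (in terms of $\epsilon$ and $\eta$), then for every residue class $a\bmod 36$ with $2a\not\in Q$ (modulo $36$) we have $\delta_a\leq 0.04+\eta$.
   Context: Standing assumptions and notation: $\epsilon>0$ is fixed, $\delta_0=\frac14-\frac{2}{\pi^2}$, and $A\subseteq[1,x]\cap\mathbb{N}$ is a set with $|A|>(\delta_0+\epsilon)x$ such that $A+A=\{a+b:a,b\in A\}$ contains no squarefree integer, and $A$ is not a subset of $4\mathbb{N}$, nor of $9\mathbb{N}$, nor of $\{n\in\mathbb{N}:n\equiv 2\pmod 4\}$. For $a\in\{0,\dots,35\}$ put $\delta_a=\frac{36\cdot\#\{n\in A: n\equiv a\pmod{36}\}}{x}$. Let $U$ be the set of residues $a\bmod 36$ with $\delta_a>1-\frac{9}{\pi^2}+\epsilon/100$, let $V$ be the set of residues $a\bmod 36$ with $\delta_a>0$, and let $Q=\{0,4,8,9,12,16,18,20,24,27,28,32\}$ (the residue classes mod $36$ containing no squarefree integers). *)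

(* Defs.v *)
From Stdlib Require Import Reals Lra Lia Arith List.
Import ListNotations.
Open Scope R_scope.

Definition delta0 : R := / 4 - 2 / (PI ^ 2).

Definition squarefree (n : nat) : Prop :=
  n <> 0%nat /\ forall d : nat, (2 <= d)%nat -> ~ Nat.divide (d * d) n.

(* Q = residue classes mod 36 containing no squarefree integer *)
Definition Qres : list nat := [0; 4; 8; 9; 12; 16; 18; 20; 24; 27; 28; 32]%nat.

Definition count_class (A : list nat) (a : nat) : nat :=
  length (filter (fun n => Nat.eqb (n mod 36) a) A).

Definition delta_res (A : list nat) (x : R) (a : nat) : R :=
  36 * INR (count_class A a) / x.

Definition standing (eps x : R) (A : list nat) : Prop :=
  NoDup A /\
  (forall n, In n A -> (1 <= n)%nat /\ INR n <= x) /\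
  INR (length A) > (delta0 + eps) * x /\
  (forall m n, In m A -> In n A -> ~ squarefree (m + n)) /\
  (exists n, In n A /\ (n mod 4 <> 0)%nat) /\
  (exists n, In n A /\ (n mod 9 <> 0)%nat) /\
  (exists n, In n A /\ (n mod 4 <> 2)%nat).

(* Main.v *)
Require Import Defs.
From Stdlib Require Import Reals Lra Lia ZArith Znumtheory Arith List Classical.
Open Scope R_scope.

Fixpoint rsum (f : nat -> R) (l : list nat) : R :=
  match l with nil => 0 | d :: l' => f d + rsum f l' end.

Lemma rsum_nonneg f l : (forall d, In d l -> 0 <= f d) -> 0 <= rsum f l.
Proof. induction l; simpl; intros H; [lra|]. pose proof (H a (or_introl eq_refl)).
  assert (0 <= rsum f l) by (apply IHl; auto). lra. Qed.

Lemma rsum_le f g l : (forall d, In d l -> f d <= g d) -> rsum f l <= rsum g l.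
Proof. induction l; simpl; intros H; [lra|]. pose proof (H a (or_introl eq_refl)).
  assert (rsum f l <= rsum g l) by (apply IHl; auto). lra. Qed.

Lemma rsum_plus f g l : rsum (fun d => f d + g d) l = rsum f l + rsum g l.
Proof. induction l; simpl; lra. Qed.

Lemma rsum_scal c f l : rsum (fun d => c * f d) l = c * rsum f l.
Proof. induction l; simpl; [ring|]. rewrite IHl. ring. Qed.

Lemma rsum_ge_term f l d : (forall e, In e l -> 0 <= f e) -> In d l -> f d <= rsum f l.
Proof. induction l; simpl; intros H Hd; [contradiction|].
  destruct Hd as [<-|Hd].
  - assert (0 <= rsum f l) by (apply rsum_nonneg; auto). lra.
  - pose proof (H a (or_introl eq_refl)). assert (f d <= rsum f l) by (apply IHl; auto). lra. Qed.

Lemma rsum_app f l1 l2 : rsum f (l1 ++ l2) = rsum f l1 + rsum f l2.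
Proof. induction l1; simpl; [ring|]. rewrite IHl1; ring. Qed.

Definition lmax (l : list nat) : nat := fold_right max 0%nat l.

Lemma lmax_ge l n : In n l -> (n <= lmax l)%nat.
Proof. induction l; simpl; [tauto|]. intros [<-|H]; [lia|]. specialize (IHl H). lia. Qed.

Lemma lmax_in l : l <> nil -> In (lmax l) l.
Proof. induction l; simpl; [congruence|]. intros _. destruct l as [|b l'].
  - simpl. left. lia.
  - assert (In (lmax (b::l')) (b::l')) by (apply IHl; congruence).
    destruct (Nat.max_spec a (lmax (b::l'))) as [[_ E]|[_ E]]; rewrite E; auto. Qed.

Lemma nodup_bound (l : list nat) (T : R) :
  0 <= T -> NoDup l -> (forall q, In q l -> INR q <= T) -> INR (length l) <= T + 1.
Proof. intros HT Hn Hb. destruct l as [|q0 l0]. { simpl. lra. }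
  set (m := lmax (q0::l0)).
  assert (Hi : incl (q0::l0) (seq 0 (S m))).
  { intros q Hq. apply in_seq. pose proof (lmax_ge _ _ Hq). unfold m. lia. }
  pose proof (NoDup_incl_length Hn Hi) as Hl. rewrite length_seq in Hl.
  apply le_INR in Hl. rewrite S_INR in Hl.
  assert (INR m <= T) by (apply Hb; apply lmax_in; congruence). lra.
Qed.

Lemma NoDup_map_inj (f : nat -> nat) l :
  (forall x y, In x l -> In y l -> f x = f y -> x = y) -> NoDup l -> NoDup (map f l).
Proof. induction l as [|a l IH]; simpl; intros Hi Hn; [constructor|].
  inversion Hn; subst. constructor.
  - intros Hin. apply in_map_iff in Hin. destruct Hin as [y [Hy Hyl]].
    assert (y = a) by (apply Hi; auto). subst. contradiction.
  - apply IH; auto. Qed.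

Lemma cong_inj (K n1 n2 : nat) : (0 < K)%nat -> (n1 / K = n2 / K)%nat ->
  (Z.of_nat K | Z.of_nat n1 - Z.of_nat n2)%Z -> n1 = n2.
Proof. intros HK Hq [c Hc].
  pose proof (Nat.div_mod_eq n1 K). pose proof (Nat.div_mod_eq n2 K).
  pose proof (Nat.mod_upper_bound n1 K ltac:(lia)).
  pose proof (Nat.mod_upper_bound n2 K ltac:(lia)).
  rewrite Hq in *. set (q := (n2 / K)%nat) in *. set (r1 := (n1 mod K)%nat) in *.
  set (r2 := (n2 mod K)%nat) in *.
  assert (E : (Z.of_nat n1 - Z.of_nat n2 = Z.of_nat r1 - Z.of_nat r2)%Z) by lia.
  rewrite E in Hc. assert (Hc0 : c = 0%Z) by nia. rewrite Hc0 in Hc. lia. Qed.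

Lemma cong_count (l : list nat) (K : nat) (Y : R) : (0 < K)%nat -> 0 <= Y -> NoDup l ->
  (forall n, In n l -> INR n <= Y) ->
  (forall n1 n2, In n1 l -> In n2 l -> (Z.of_nat K | Z.of_nat n1 - Z.of_nat n2)%Z) ->
  INR (length l) <= Y / INR K + 1.
Proof. intros HK HY Hn Hb Hc.
  assert (HKr : 0 < INR K) by (apply lt_0_INR; lia).
  rewrite <- (length_map (fun n => n / K)%nat).
  apply nodup_bound.
  - apply Rmult_le_pos; [lra|]. apply Rlt_le, Rinv_0_lt_compat; lra.
  - apply NoDup_map_inj; auto. intros x y Hx Hy E. apply (cong_inj K); auto.
  - intros q Hq. apply in_map_iff in Hq. destruct Hq as [n [<- Hnl]].
    pose proof (Nat.Div0.mul_div_le n K) as H. apply le_INR in H. rewrite mult_INR in H.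
    specialize (Hb n Hnl). apply (Rmult_le_reg_l (INR K)); auto.
    field_simplify; lra. Qed.

Definition divb (d n : nat) : bool := Nat.eqb (n mod (d*d)) 0.

Lemma union_bound (G : nat -> bool) D T :
  (forall n, In n T -> exists d, In d D /\ G d = true /\ divb d n = true) ->
  INR (length T) <= rsum (fun d => if G d then INR (length (filter (divb d) T)) else 0) D.
Proof.
  induction T as [|x T IH]; intros H.
  - simpl. apply rsum_nonneg. intros d _. destruct (G d); simpl; lra.
  - assert (IH' := IH (fun n Hn => H n (or_intror Hn))).
    destruct (H x (or_introl eq_refl)) as [d0 [Hd0 [Gd0 Dd0]]].
    assert (Hind : 1 <= rsum (fun d => if andb (G d) (divb d x) then 1 else 0) D).
    { pose proof (rsum_ge_term (fun d => if andb (G d) (divb d x) then 1 else 0) D d0) as Hge.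
      simpl in Hge. rewrite Gd0, Dd0 in Hge. simpl in Hge. apply Hge; auto.
      intros e _. destruct (andb _ _); lra. }
    apply Rle_trans with (rsum (fun d => (if andb (G d) (divb d x) then 1 else 0) +
        (if G d then INR (length (filter (divb d) T)) else 0)) D).
    + rewrite rsum_plus. change (length (x :: T)) with (Datatypes.S (length T)). rewrite S_INR. lra.
    + apply rsum_le. intros d _. destruct (G d); [|simpl andb; lra]. simpl filter.
      destruct (divb d x); [|simpl; lra]. simpl length. rewrite S_INR. simpl andb. lra.
Qed.

Lemma gauss2 (M P z : Z) : (M | z)%Z -> (P | z)%Z -> rel_prime M P -> (M * P | z)%Z.
Proof. intros [k Hk] HP Hr. subst z.
  assert (HPk : (P | k)%Z).
  { apply Gauss with M. rewrite Z.mul_comm. auto. apply rel_prime_sym; auto. }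
  destruct HPk as [j Hj]. subst k. exists j. ring. Qed.

Lemma nat_div_Z (a b : nat) : Nat.divide a b -> (Z.of_nat a | Z.of_nat b)%Z.
Proof. intros [c Hc]. subst b. exists (Z.of_nat c). rewrite Nat2Z.inj_mul. ring. Qed.

Lemma count_ind (s : R) : 0 <= s -> forall L k,
  rsum (fun d => if Rle_dec (INR d) s then 1 else 0) (seq k L) <= Rmax 0 (s - INR k + 1).
Proof. intros Hs L. induction L as [|L IH]; intros k; simpl.
  - apply Rmax_l.
  - specialize (IH (S k)). rewrite S_INR in IH.
    destruct (Rle_dec (INR k) s).
    + rewrite Rmax_right in IH by lra. rewrite Rmax_right by lra. lra.
    + rewrite Rmax_left in IH by lra. pose proof (Rmax_l 0 (s - INR k + 1)). lra.
Qed.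

Lemma count_bound (G : nat -> bool) (M : nat) (Y : R) (S : list nat) :
  (0 < M)%nat -> 0 <= Y -> NoDup S ->
  (forall n, In n S -> (1 <= n)%nat /\ INR n <= Y) ->
  (forall n1 n2, In n1 S -> In n2 S -> (Z.of_nat M | Z.of_nat n1 - Z.of_nat n2)%Z) ->
  (forall d, G d = true -> rel_prime (Z.of_nat M) (Z.of_nat (d*d))) ->
  (forall n, In n S -> exists d, (2 <= d)%nat /\ G d = true /\ Nat.divide (d*d) n) ->
  exists L, INR (length S) <=
    Y / INR M * rsum (fun d => if G d then / (INR d * INR d) else 0) (seq 2 L) + sqrt Y.
Proof.
  intros HM HY Hn Hb Hc Hr Hd. exists (lmax S).
  assert (HMr : 0 < INR M) by (apply lt_0_INR; lia).
  set (ind := fun d => if Rle_dec (INR d) (sqrt Y) then 1 else 0).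
  eapply Rle_trans.
  { apply (union_bound G (seq 2 (lmax S)) S).
    intros n Hin. destruct (Hd n Hin) as [d [H2 [Gd Dd]]]. exists d. split; [|split; auto].
    - apply in_seq. pose proof (lmax_ge _ _ Hin). destruct Dd as [c Hc'].
      destruct (Hb n Hin) as [H1 _]. destruct c; [lia|]. nia.
    - unfold divb. apply Nat.eqb_eq. apply Nat.Lcm0.mod_divide. auto. }
  apply Rle_trans with (rsum (fun d => Y / INR M * (if G d then / (INR d * INR d) else 0) + ind d) (seq 2 (lmax S))).
  2:{ rewrite rsum_plus, rsum_scal. apply Rplus_le_compat_l.
      pose proof (count_ind (sqrt Y) (sqrt_pos Y) (lmax S) 2). simpl INR in H.
      unfold ind. eapply Rle_trans; [apply H|]. apply Rmax_lub; [apply sqrt_pos|lra]. }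
  apply rsum_le. intros d Hdin. apply in_seq in Hdin.
  assert (Hdr : 2 <= INR d) by (replace 2 with (INR 2) by (simpl; lra); apply le_INR; lia).
  assert (Hind : 0 <= ind d) by (unfold ind; destruct Rle_dec; lra).
  destruct (G d) eqn:Gd.
  2:{ rewrite Rmult_0_r. lra. }
  set (F := filter (divb d) S).
  destruct F as [|n0 F0] eqn:EF.
  { simpl. assert (0 <= Y / INR M * / (INR d * INR d)).
    { apply Rmult_le_pos; [apply Rmult_le_pos; [lra|apply Rlt_le, Rinv_0_lt_compat; lra]|].
      apply Rlt_le, Rinv_0_lt_compat; nra. } lra. }
  rewrite <- EF.
  assert (HinF : forall n, In n F -> In n S /\ Nat.divide (d*d) n).
  { intros n Hn'. unfold F in Hn'. apply filter_In in Hn'. destruct Hn' as [H1 H2].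
    split; auto. unfold divb in H2. apply Nat.eqb_eq in H2. apply Nat.Lcm0.mod_divide; auto. }
  assert (Hi1 : ind d = 1).
  { unfold ind. destruct Rle_dec as [|Hno]; auto. exfalso. apply Hno.
    destruct (HinF n0) as [Hs0 Hdv]. { rewrite EF. left; auto. }
    destruct (Hb n0 Hs0) as [H1 H2]. destruct Hdv as [c Hc'].
    assert (INR (d*d) <= INR n0) by (apply le_INR; destruct c; nia).
    rewrite mult_INR in H. rewrite <- (sqrt_square (INR d)) by lra.
    apply sqrt_le_1; nra. }
  rewrite Hi1.
  assert (Hcc := cong_count F (M * (d*d)) Y ltac:(nia) HY).
  rewrite mult_INR, mult_INR in Hcc.
  replace (Y / INR M * / (INR d * INR d)) with (Y / (INR M * (INR d * INR d))) by (field; nra).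
  apply Hcc.
  - unfold F. apply NoDup_filter; auto.
  - intros n Hn'. apply Hb. apply HinF; auto.
  - intros n1 n2 H1 H2. apply HinF in H1, H2. destruct H1 as [H1 D1]. destruct H2 as [H2 D2].
    rewrite Nat2Z.inj_mul. apply gauss2; auto.
    apply nat_div_Z in D1, D2. apply Z.divide_sub_r; auto.
Qed.

Definition Gp (ps : list nat) (d : nat) : bool :=
  forallb (fun p => negb (Nat.eqb (d mod p) 0)) ps.

Definition gterm (G : nat -> bool) (d : nat) : R := if G d then / (INR d * INR d) else 0.

Fixpoint zsum (G : nat -> bool) (B : Z) (l : list nat) : Z :=
  match l with nil => 0%Z
  | d :: l' => ((if G d then B / (Z.of_nat d * Z.of_nat d) + 1 else 0) + zsum G B l')%Z end.

Lemma tail_bound : forall m k, (1 <= k)%nat ->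
  rsum (fun d => / (INR d * INR d)) (seq (S k) m) <= / INR k - / INR (k + m).
Proof. induction m as [|m IH]; intros k Hk; cbn [seq rsum].
  - rewrite Nat.add_0_r. lra.
  - specialize (IH (S k) ltac:(lia)). replace (S k + m)%nat with (k + S m)%nat in IH by lia.
    assert (Hk1 : 1 <= INR k) by (replace 1 with (INR 1) by reflexivity; apply le_INR; lia).
    rewrite S_INR.
    assert (/ ((INR k + 1) * (INR k + 1)) <= / INR k - / (INR k + 1)).
    { assert (E : / INR k - / (INR k + 1) = / (INR k * (INR k + 1))) by (field; lra).
      rewrite E. apply Rinv_le_contravar; nra. }
    rewrite S_INR in IH. lra.
Qed.

Lemma term_le (G : nat -> bool) (B : Z) (d : nat) : (0 < B)%Z -> (1 <= d)%nat ->
  gterm G d <= IZR (if G d then B / (Z.of_nat d * Z.of_nat d) + 1 else 0) / IZR B.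
Proof. intros HB Hd. unfold gterm. destruct (G d).
  2:{ unfold Rdiv. rewrite Rmult_0_l. lra. }
  set (dd := (Z.of_nat d * Z.of_nat d)%Z).
  assert (Hdd : (0 < dd)%Z) by (unfold dd; nia).
  assert (Hlt : (B < dd * (B / dd + 1))%Z).
  { pose proof (Z.div_mod B dd ltac:(lia)). pose proof (Z.mod_pos_bound B dd Hdd). nia. }
  apply IZR_lt in Hlt. rewrite mult_IZR, plus_IZR in Hlt.
  assert (E : INR d * INR d = IZR dd) by (unfold dd; rewrite mult_IZR, <- INR_IZR_INZ; reflexivity).
  rewrite E. apply IZR_lt in Hdd. apply IZR_lt in HB. rewrite plus_IZR.
  apply (Rmult_le_reg_l (IZR dd * IZR B)); [nra|].
  field_simplify; try lra.
Qed.

Lemma finite_le (G : nat -> bool) (B : Z) : (0 < B)%Z -> forall l, (forall d, In d l -> (1 <= d)%nat) ->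
  rsum (gterm G) l <= IZR (zsum G B l) / IZR B.
Proof. intros HB l. induction l as [|d l IH]; intros Hl; simpl.
  - unfold Rdiv. rewrite Rmult_0_l. lra.
  - rewrite plus_IZR. unfold Rdiv in *. rewrite Rmult_plus_distr_r.
    pose proof (term_le G B d HB (Hl d (or_introl eq_refl))). unfold Rdiv in H.
    specialize (IH (fun e He => Hl e (or_intror He))). lra.
Qed.

Lemma gterm_nonneg G d : (1 <= d)%nat -> 0 <= gterm G d.
Proof. intros. unfold gterm. destruct (G d); [|lra].
  assert (1 <= INR d) by (replace 1 with (INR 1) by reflexivity; apply le_INR; lia).
  apply Rlt_le, Rinv_0_lt_compat; nra. Qed.

Lemma gsum_bound (G : nat -> bool) (B : Z) (K : nat) (C : R) : (0 < B)%Z -> (1 <= K)%nat ->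
  IZR (zsum G B (seq 2 K)) / IZR B + / INR (S K) <= C ->
  forall L, rsum (gterm G) (seq 2 L) <= C.
Proof. intros HB HK HC L.
  assert (Hfin := finite_le G B HB (seq 2 K) ltac:(intros d Hd; apply in_seq in Hd; lia)).
  assert (HKp : 0 < / INR (S K)) by (apply Rinv_0_lt_compat, lt_0_INR; lia).
  destruct (Nat.le_gt_cases L K) as [HL|HL].
  - set (Zs := zsum G B (seq 2 K)) in *.
    replace K with (L + (K - L))%nat in Hfin by lia. rewrite seq_app, rsum_app in Hfin.
    assert (0 <= rsum (gterm G) (seq (2 + L) (K - L))).
    { apply rsum_nonneg. intros d Hd. apply in_seq in Hd. apply gterm_nonneg. lia. }
    lra.
  - replace L with (K + (L - K))%nat by lia. rewrite seq_app, rsum_app.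
    assert (Ht : rsum (gterm G) (seq (2 + K) (L - K)) <= / INR (S K)).
    { eapply Rle_trans. apply (rsum_le _ (fun d => / (INR d * INR d))).
      { intros d Hd. apply in_seq in Hd. unfold gterm. destruct (G d); [lra|].
        assert (1 <= INR d) by (replace 1 with (INR 1) by reflexivity; apply le_INR; lia).
        apply Rlt_le, Rinv_0_lt_compat; nra. }
      replace (2 + K)%nat with (S (S K)) by lia.
      eapply Rle_trans. apply tail_bound. lia.
      assert (0 < / INR (S K + (L - K))) by (apply Rinv_0_lt_compat, lt_0_INR; lia). lra. }
    lra.
Qed.

Definition G30 := Gp (2 :: 3 :: 5 :: nil)%nat.
Definition G42 := Gp (2 :: 3 :: 7 :: nil)%nat.
Definition G210 := Gp (2 :: 3 :: 5 :: 7 :: nil)%nat.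


Lemma C30 L : rsum (gterm G30) (seq 2 L) <= 532 / 10000.
Proof. apply (gsum_bound G30 1000000000 2000); try lia.
  replace (zsum G30 1000000000 (seq 2 2000)) with 52624913%Z by (vm_compute; reflexivity).
  rewrite INR_IZR_INZ. simpl Z.of_nat. lra. Qed.
Lemma C42 L : rsum (gterm G42) (seq 2 L) <= 747 / 10000.
Proof. apply (gsum_bound G42 1000000000 2000); try lia.
  replace (zsum G42 1000000000 (seq 2 2000)) with 74100236%Z by (vm_compute; reflexivity).
  rewrite INR_IZR_INZ. simpl Z.of_nat. lra. Qed.
Lemma C210 L : rsum (gterm G210) (seq 2 L) <= 317 / 10000.
Proof. apply (gsum_bound G210 1000000000 2000); try lia.
  replace (zsum G210 1000000000 (seq 2 2000)) with 31159118%Z by (vm_compute; reflexivity).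
  rewrite INR_IZR_INZ. simpl Z.of_nat. lra. Qed.

Lemma prime5 : prime 5. Proof. apply prime_intro; [lia|]. intros n Hn.
  apply Zgcd_1_rel_prime. assert (n = 1 \/ n = 2 \/ n = 3 \/ n = 4)%Z as H by lia.
  destruct H as [ -> | [ -> | [ -> | -> ] ] ]; reflexivity. Qed.
Lemma prime7 : prime 7. Proof. apply prime_intro; [lia|]. intros n Hn.
  apply Zgcd_1_rel_prime. assert (n = 1 \/ n = 2 \/ n = 3 \/ n = 4 \/ n = 5 \/ n = 6)%Z as H by lia.
  destruct H as [->|[->|[ -> | [ -> | [ -> | -> ] ] ]]]; reflexivity. Qed.

Lemma relp_sq (p d : nat) : prime (Z.of_nat p) -> (d mod p <> 0)%nat ->
  rel_prime (Z.of_nat (d*d)) (Z.of_nat p).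
Proof. intros Hp Hd. apply rel_prime_sym. rewrite Nat2Z.inj_mul.
  assert (rel_prime (Z.of_nat p) (Z.of_nat d)).
  { apply prime_rel_prime; auto. intros Hdv. apply Hd.
    assert (Hp0 : Z.of_nat p <> 0%Z) by (intro E; rewrite E in Hp; apply not_prime_0; auto).
    apply Z.mod_divide in Hdv; auto. rewrite <- Nat2Z.inj_mod in Hdv. lia. }
  apply rel_prime_mult; auto. Qed.

Lemma relp_list (x : Z) (ps : list Z) : (forall p, In p ps -> rel_prime x p) ->
  rel_prime x (fold_right Z.mul 1%Z ps).
Proof. induction ps; simpl; intros H. apply rel_prime_sym, rel_prime_1.
  apply rel_prime_mult; auto. Qed.

Lemma Gp_mod ps d p : Gp ps d = true -> In p ps -> (d mod p <> 0)%nat.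
Proof. unfold Gp. intros H Hp. rewrite forallb_forall in H. specialize (H p Hp).
  apply Bool.negb_true_iff, Nat.eqb_neq in H. auto. Qed.

Lemma relp30 d : G30 d = true -> rel_prime (Z.of_nat 900) (Z.of_nat (d*d)).
Proof. intros H. apply rel_prime_sym.
  replace (Z.of_nat 900) with (fold_right Z.mul 1%Z (2::2::3::3::5::5::nil)%Z) by reflexivity.
  apply relp_list. intros p Hp.
  assert (H2 := relp_sq 2 d prime_2 (Gp_mod _ _ 2 H ltac:(simpl; tauto))).
  assert (H3 := relp_sq 3 d prime_3 (Gp_mod _ _ 3 H ltac:(simpl; tauto))).
  assert (H5 := relp_sq 5 d prime5 (Gp_mod _ _ 5 H ltac:(simpl; tauto))).
  simpl in Hp. intuition (subst; auto). Qed.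
Lemma relp42 d : G42 d = true -> rel_prime (Z.of_nat 1764) (Z.of_nat (d*d)).
Proof. intros H. apply rel_prime_sym.
  replace (Z.of_nat 1764) with (fold_right Z.mul 1%Z (2::2::3::3::7::7::nil)%Z) by reflexivity.
  apply relp_list. intros p Hp.
  assert (H2 := relp_sq 2 d prime_2 (Gp_mod _ _ 2 H ltac:(simpl; tauto))).
  assert (H3 := relp_sq 3 d prime_3 (Gp_mod _ _ 3 H ltac:(simpl; tauto))).
  assert (H5 := relp_sq 7 d prime7 (Gp_mod _ _ 7 H ltac:(simpl; tauto))).
  simpl in Hp. intuition (subst; auto). Qed.
Lemma relp72 d : G210 d = true -> rel_prime (Z.of_nat 72) (Z.of_nat (d*d)).
Proof. intros H. apply rel_prime_sym.
  replace (Z.of_nat 72) with (fold_right Z.mul 1%Z (2::2::2::3::3::nil)%Z) by reflexivity.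
  apply relp_list. intros p Hp.
  assert (H2 := relp_sq 2 d prime_2 (Gp_mod _ _ 2 H ltac:(simpl; tauto))).
  assert (H3 := relp_sq 3 d prime_3 (Gp_mod _ _ 3 H ltac:(simpl; tauto))).
  simpl in Hp. intuition (subst; auto). Qed.

Lemma nsq_d n : n <> 0%nat -> ~ squarefree n -> exists d, (2 <= d)%nat /\ Nat.divide (d*d) n.
Proof. intros Hn Hs. apply NNPP. intros Hno. apply Hs. split; auto.
  intros d Hd Hdv. apply Hno. exists d. auto. Qed.

Lemma dvd_sq p d n : (0 < p)%nat -> Nat.divide (d*d) n -> (d mod p = 0)%nat -> (n mod (p*p) = 0)%nat.
Proof. intros Hp Hdv Hm. apply Nat.Lcm0.mod_divide. 
  apply Nat.Lcm0.mod_divide in Hm. destruct Hm as [k Hk]. subst d.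
  eapply Nat.divide_trans; [|apply Hdv]. exists (k*k)%nat. ring. Qed.

Lemma good_of (ps : list nat) n : n <> 0%nat -> ~ squarefree n ->
  (forall p, In p ps -> (0 < p)%nat /\ (n mod (p*p) <> 0)%nat) ->
  exists d, (2 <= d)%nat /\ Gp ps d = true /\ Nat.divide (d*d) n.
Proof. intros Hn Hs Hp. destruct (nsq_d n Hn Hs) as [d [Hd Hdv]]. exists d. split; auto. split; auto.
  unfold Gp. apply forallb_forall. intros p Hin. destruct (Hp p Hin) as [Hp0 Hpn].
  apply Bool.negb_true_iff, Nat.eqb_neq. intros Hm. apply Hpn. apply (dvd_sq p d); auto. Qed.

Lemma mod_4_36 n : (n mod 4 = (n mod 36) mod 4)%nat.
Proof. assert (E : n = (n mod 36 + (n / 36 * 9) * 4)%nat) by (pose proof (Nat.div_mod_eq n 36); lia).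
  rewrite E at 1. apply Nat.Div0.mod_add. Qed.
Lemma mod_9_36 n : (n mod 9 = (n mod 36) mod 9)%nat.
Proof. assert (E : n = (n mod 36 + (n / 36 * 4) * 9)%nat) by (pose proof (Nat.div_mod_eq n 36); lia).
  rewrite E at 1. apply Nat.Div0.mod_add. Qed.

Lemma Qfact r : (r < 36)%nat -> ~ In r Qres -> (r mod 4 <> 0 /\ r mod 9 <> 0)%nat.
Proof. intros Hr HQ.
  do 36 (destruct r as [|r]; [try (exfalso; apply HQ; simpl; tauto); split; simpl; discriminate|]).
  lia. Qed.

Lemma modeq_Z K n1 n2 : (n1 mod K = n2 mod K)%nat -> (Z.of_nat K | Z.of_nat n1 - Z.of_nat n2)%Z.
Proof. intros E. pose proof (Nat.div_mod_eq n1 K). pose proof (Nat.div_mod_eq n2 K).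
  exists (Z.of_nat (n1 / K) - Z.of_nat (n2 / K))%Z.
  set (q1 := (n1 / K)%nat) in *. set (q2 := (n2 / K)%nat) in *.
  rewrite E in H. set (r := (n2 mod K)%nat) in *. rewrite H, H0.
  rewrite !Nat2Z.inj_add, !Nat2Z.inj_mul. ring. Qed.

Lemma len_split (f : nat -> bool) l :
  length l = (length (filter f l) + length (filter (fun x => negb (f x)) l))%nat.
Proof. induction l; simpl; auto. destruct (f a); simpl; lia. Qed.

Lemma twice_mod (p b : nat) : (p = 25 \/ p = 49)%nat -> ((2*b) mod p = 0)%nat -> (b mod p = 0)%nat.
Proof. intros Hp H. assert (Hp0 : p <> 0%nat) by lia.
  pose proof (Nat.div_mod_eq b p). pose proof (Nat.mod_upper_bound b p Hp0).
  set (s := (b mod p)%nat) in *. set (q := (b / p)%nat) in *.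
  assert (E : (2 * b = 2 * s + (2 * q) * p)%nat) by lia. rewrite E, Nat.Div0.mod_add in H.
  apply Nat.Lcm0.mod_divide in H. destruct H as [c Hc]. destruct Hp; subst p; lia. Qed.

Lemma sqrt_small (x eta : R) : 0 < eta -> 0 < x -> 2 * 108 ^ 2 / eta ^ 2 <= x ->
  sqrt (2 * x) <= x * eta / 108.
Proof. intros He Hx H.
  assert (H1 : 2 * 108 ^ 2 <= x * eta ^ 2).
  { apply (Rmult_le_compat_r (eta ^ 2)) in H; [|nra].
    replace (2 * 108 ^ 2 / eta ^ 2 * eta ^ 2) with (2 * 108^2) in H by (field; lra). lra. }
  set (t := x * eta / 108). assert (0 <= t) by (unfold t; nra).
  assert (2 * x <= t * t) by (unfold t; nra).
  rewrite <- (sqrt_square t) by auto. apply sqrt_le_1; nra. Qed.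

Theorem lemma5 :
  forall eps eta : R, 0 < eps -> 0 < eta ->
  exists X0 : R, forall (x : R) (A : list nat),
    X0 <= x -> standing eps x A ->
    forall a : nat, (a < 36)%nat ->
      ~ In ((2 * a) mod 36)%nat Qres ->
      delta_res A x a <= 4 / 100 + eta.
Proof.
  intros eps eta Heps Heta.
  exists (2 * 108 ^ 2 / eta ^ 2 + 36 / eta + 1).
  intros x A Hx Hst a Ha HQ.
  assert (HX1 : 0 < 2 * 108 ^ 2 / eta ^ 2).
  { unfold Rdiv. apply Rmult_lt_0_compat; [nra|apply Rinv_0_lt_compat; nra]. }
  assert (HX2 : 0 < 36 / eta).
  { unfold Rdiv. apply Rmult_lt_0_compat; [lra|apply Rinv_0_lt_compat; nra]. }
  assert (Hxpos : 0 < x) by lra.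
  assert (Hxe : 36 <= x * eta).
  { assert (H36 : 36 / eta <= x) by lra. apply (Rmult_le_compat_r eta) in H36; [|lra].
    replace (36 / eta * eta) with 36 in H36 by (field; lra). lra. }
  assert (Hsq2 : sqrt (2 * x) <= x * eta / 108) by (apply sqrt_small; auto; lra).
  destruct Hst as [Hnd [Hrng [_ [Hsq _]]]].
  unfold delta_res, count_class.
  set (B := filter (fun n => Nat.eqb (n mod 36) a) A).
  assert (HB : forall b, In b B -> In b A /\ (b mod 36 = a)%nat).
  { intros b Hb. unfold B in Hb. apply filter_In in Hb. destruct Hb as [H1 H2].
    split; auto. apply Nat.eqb_eq; auto. }
  assert (HBnd : NoDup B) by (apply NoDup_filter; auto).
  destruct (Qfact ((2*a) mod 36) (Nat.mod_upper_bound (2*a) 36 ltac:(lia)) HQ) as [Hr4 Hr9].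
  assert (Hsum36 : forall b1 b2, In b1 B -> In b2 B -> ((b1 + b2) mod 36 = (2*a) mod 36)%nat).
  { intros b1 b2 H1 H2. destruct (HB b1 H1) as [_ E1]. destruct (HB b2 H2) as [_ E2].
    rewrite Nat.Div0.add_mod, E1, E2. f_equal; lia. }
  assert (Hbase : forall b1 b2, In b1 B -> In b2 B -> (b1 + b2 <> 0)%nat /\ ~ squarefree (b1+b2)
      /\ ((b1+b2) mod (2*2) <> 0)%nat /\ ((b1+b2) mod (3*3) <> 0)%nat).
  { intros b1 b2 H1 H2. destruct (HB b1 H1) as [A1 _]. destruct (HB b2 H2) as [A2 _].
    destruct (Hrng b1 A1) as [P1 _]. split; [lia|]. split; [apply Hsq; auto|].
    change (2*2)%nat with 4%nat. change (3*3)%nat with 9%nat.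
    rewrite mod_4_36, mod_9_36, Hsum36; auto. }
  assert (Hp36 : forall b1 b2, In b1 B -> In b2 B -> (36 | Z.of_nat b1 - Z.of_nat b2)%Z).
  { intros b1 b2 H1 H2. change 36%Z with (Z.of_nat 36). apply modeq_Z.
    rewrite (proj2 (HB b1 H1)), (proj2 (HB b2 H2)). auto. }
  assert (Hrng' : forall b, In b B -> (1 <= b)%nat /\ INR b <= x) by (intros b Hb; apply Hrng, HB, Hb).
  assert (Hfin : INR (length B) <= x / 36 * (4 / 100 + eta)).
  2:{ replace (4/100+eta) with (36 * (x/36*(4/100+eta)) / x) by (field; lra).
      unfold Rdiv. apply Rmult_le_compat_r; [left; apply Rinv_0_lt_compat; lra|]. lra. }
  destruct (classic (forall b, In b B -> (b mod 25 = 0)%nat)) as [H25|H25].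
  { assert (Hc := cong_count B 900 x ltac:(lia) ltac:(lra) HBnd ltac:(intros; apply Hrng'; auto)).
    rewrite ?(INR_IZR_INZ 900), ?(INR_IZR_INZ 1764) in Hc. simpl Z.of_nat in Hc.
    assert (Hl : INR (length B) <= x / 900 + 1).
    { apply Hc. intros n1 n2 H1 H2. change 900%Z with (36 * 25)%Z.
      apply gauss2; auto. change 25%Z with (Z.of_nat 25). apply modeq_Z. rewrite !H25; auto.
      apply Zgcd_1_rel_prime. reflexivity. }
    lra. }
  destruct (classic (forall b, In b B -> (b mod 49 = 0)%nat)) as [H49|H49].
  { assert (Hc := cong_count B 1764 x ltac:(lia) ltac:(lra) HBnd ltac:(intros; apply Hrng'; auto)).
    rewrite ?(INR_IZR_INZ 900), ?(INR_IZR_INZ 1764) in Hc. simpl Z.of_nat in Hc.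
    assert (Hl : INR (length B) <= x / 1764 + 1).
    { apply Hc. intros n1 n2 H1 H2. change 1764%Z with (36 * 49)%Z.
      apply gauss2; auto. change 49%Z with (Z.of_nat 49). apply modeq_Z. rewrite !H49; auto.
      apply Zgcd_1_rel_prime. reflexivity. }
    lra. }
  apply not_all_ex_not in H25. destruct H25 as [w1 Hw1]. apply imply_to_and in Hw1.
  destruct Hw1 as [Hw1B Hw1m].
  apply not_all_ex_not in H49. destruct H49 as [w2 Hw2]. apply imply_to_and in Hw2.
  destruct Hw2 as [Hw2B Hw2m].
  set (B0 := filter (fun b => Nat.eqb (b mod 25) 0) B).
  set (Bn := filter (fun b => negb (Nat.eqb (b mod 25) 0)) B).
  set (B1 := filter (fun b => Nat.eqb (b mod 49) 0) Bn).
  set (B2 := filter (fun b => negb (Nat.eqb (b mod 49) 0)) Bn).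
  assert (Hlen : length B = (length B0 + length B1 + length B2)%nat).
  { rewrite (len_split (fun b => Nat.eqb (b mod 25) 0) B). fold B0 Bn.
    rewrite (len_split (fun b => Nat.eqb (b mod 49) 0) Bn). fold B1 B2. lia. }
  assert (HB0 : forall c, In c B0 -> In c B /\ (c mod 25 = 0)%nat).
  { intros c Hc. unfold B0 in Hc. apply filter_In in Hc. destruct Hc as [H1 H2].
    split; auto. apply Nat.eqb_eq; auto. }
  assert (HBn : forall c, In c Bn -> In c B /\ (c mod 25 <> 0)%nat).
  { intros c Hc. unfold Bn in Hc. apply filter_In in Hc. destruct Hc as [H1 H2].
    split; auto. apply Bool.negb_true_iff, Nat.eqb_neq in H2; auto. }
  assert (HB1 : forall c, In c B1 -> In c B /\ (c mod 49 = 0)%nat).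
  { intros c Hc. unfold B1 in Hc. apply filter_In in Hc. destruct Hc as [H1 H2].
    split; [apply HBn; auto|]. apply Nat.eqb_eq; auto. }
  assert (HB2 : forall c, In c B2 -> In c B /\ (c mod 25 <> 0)%nat /\ (c mod 49 <> 0)%nat).
  { intros c Hc. unfold B2 in Hc. apply filter_In in Hc. destruct Hc as [H1 H2].
    destruct (HBn c H1) as [H3 H4]. split; auto. split; auto.
    apply Bool.negb_true_iff, Nat.eqb_neq in H2; auto. }
  set (S0 := map (fun b => (w1 + b)%nat) B0).
  destruct (count_bound G30 900 (2 * x) S0) as [L0 HS0].
  { lia. } { lra. }
  { apply NoDup_map_inj; [intros; lia|]. apply NoDup_filter; auto. }
  { intros n Hn. apply in_map_iff in Hn. destruct Hn as [c [<- Hc]].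
    destruct (Hrng' c (proj1 (HB0 c Hc))) as [P1 P2]. destruct (Hrng' w1 Hw1B) as [P3 P4].
    split; [lia|]. rewrite plus_INR. lra. }
  { intros n1 n2 H1 H2. apply in_map_iff in H1, H2.
    destruct H1 as [c1 [<- Hc1]]. destruct H2 as [c2 [<- Hc2]].
    destruct (HB0 c1 Hc1) as [I1 M1]. destruct (HB0 c2 Hc2) as [I2 M2].
    replace (Z.of_nat (w1 + c1) - Z.of_nat (w1 + c2))%Z with (Z.of_nat c1 - Z.of_nat c2)%Z by lia.
    change (Z.of_nat 900) with (36 * 25)%Z. apply gauss2; auto.
    change 25%Z with (Z.of_nat 25). apply modeq_Z. rewrite M1, M2; auto.
    apply Zgcd_1_rel_prime. reflexivity. }
  { apply relp30. }
  { intros n Hn. apply in_map_iff in Hn. destruct Hn as [c [<- Hc]].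
    destruct (HB0 c Hc) as [I1 M1]. destruct (Hbase w1 c Hw1B I1) as [N1 [N2 [N3 N4]]].
    apply good_of; auto. intros p Hp. simpl in Hp.
    destruct Hp as [<-|[<-|[<-|[]]]]; split; auto; try lia.
    change (5*5)%nat with 25%nat. rewrite Nat.Div0.add_mod, M1, Nat.add_0_r, Nat.Div0.mod_mod. auto. }
  set (S1 := map (fun b => (w2 + b)%nat) B1).
  destruct (count_bound G42 1764 (2 * x) S1) as [L1 HS1].
  { lia. } { lra. }
  { apply NoDup_map_inj; [intros; lia|]. apply NoDup_filter, NoDup_filter; auto. }
  { intros n Hn. apply in_map_iff in Hn. destruct Hn as [c [<- Hc]].
    destruct (Hrng' c (proj1 (HB1 c Hc))) as [P1 P2]. destruct (Hrng' w2 Hw2B) as [P3 P4].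
    split; [lia|]. rewrite plus_INR. lra. }
  { intros n1 n2 H1 H2. apply in_map_iff in H1, H2.
    destruct H1 as [c1 [<- Hc1]]. destruct H2 as [c2 [<- Hc2]].
    destruct (HB1 c1 Hc1) as [I1 M1]. destruct (HB1 c2 Hc2) as [I2 M2].
    replace (Z.of_nat (w2 + c1) - Z.of_nat (w2 + c2))%Z with (Z.of_nat c1 - Z.of_nat c2)%Z by lia.
    change (Z.of_nat 1764) with (36 * 49)%Z. apply gauss2; auto.
    change 49%Z with (Z.of_nat 49). apply modeq_Z. rewrite M1, M2; auto.
    apply Zgcd_1_rel_prime. reflexivity. }
  { apply relp42. }
  { intros n Hn. apply in_map_iff in Hn. destruct Hn as [c [<- Hc]].
    destruct (HB1 c Hc) as [I1 M1]. destruct (Hbase w2 c Hw2B I1) as [N1 [N2 [N3 N4]]].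
    apply good_of; auto. intros p Hp. simpl in Hp.
    destruct Hp as [<-|[<-|[<-|[]]]]; split; auto; try lia.
    change (7*7)%nat with 49%nat. rewrite Nat.Div0.add_mod, M1, Nat.add_0_r, Nat.Div0.mod_mod. auto. }
  set (S2 := map (fun b => (2 * b)%nat) B2).
  destruct (count_bound G210 72 (2 * x) S2) as [L2 HS2].
  { lia. } { lra. }
  { apply NoDup_map_inj; [intros; lia|]. apply NoDup_filter, NoDup_filter; auto. }
  { intros n Hn. apply in_map_iff in Hn. destruct Hn as [c [<- Hc]].
    destruct (Hrng' c (proj1 (HB2 c Hc))) as [P1 P2].
    split; [lia|]. rewrite mult_INR. simpl (INR 2). lra. }
  { intros n1 n2 H1 H2. apply in_map_iff in H1, H2.
    destruct H1 as [c1 [<- Hc1]]. destruct H2 as [c2 [<- Hc2]].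
    destruct (HB2 c1 Hc1) as [I1 _]. destruct (HB2 c2 Hc2) as [I2 _].
    destruct (Hp36 c1 c2 I1 I2) as [k Hk]. exists k. simpl Z.of_nat. lia. }
  { apply relp72. }
  { intros n Hn. apply in_map_iff in Hn. destruct Hn as [c [<- Hc]].
    destruct (HB2 c Hc) as [I1 [M1 M2]]. destruct (Hbase c c I1 I1) as [N1 [N2 [N3 N4]]].
    replace (2 * c)%nat with (c + c)%nat by lia.
    apply good_of; auto. intros p Hp. simpl in Hp.
    destruct Hp as [<-|[<-|[<-|[<-|[]]]]]; split; auto; try lia.
    - change (5*5)%nat with 25%nat. intros E. apply M1. apply (twice_mod 25); auto.
      replace (2*c)%nat with (c+c)%nat by lia. auto.
    - change (7*7)%nat with 49%nat. intros E. apply M2. apply (twice_mod 49); auto.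
      replace (2*c)%nat with (c+c)%nat by lia. auto. }
  pose proof (C30 L0) as K0. pose proof (C42 L1) as K1. pose proof (C210 L2) as K2.
  unfold gterm in K0, K1, K2.
  unfold S0, S1, S2 in *. rewrite length_map in HS0, HS1, HS2.
  rewrite (INR_IZR_INZ 900) in HS0. rewrite (INR_IZR_INZ 1764) in HS1. rewrite (INR_IZR_INZ 72) in HS2. simpl Z.of_nat in HS0, HS1, HS2.
  set (R0 := rsum _ (seq 2 L0)) in *. set (R1 := rsum _ (seq 2 L1)) in *.
  set (R2 := rsum _ (seq 2 L2)) in *.
  assert (E0 : 2 * x / 900 * R0 <= 2 * x / 900 * (532/10000)) by (apply Rmult_le_compat_l; lra).
  assert (E1 : 2 * x / 1764 * R1 <= 2 * x / 1764 * (747/10000)) by (apply Rmult_le_compat_l; lra).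
  assert (E2 : 2 * x / 72 * R2 <= 2 * x / 72 * (317/10000)) by (apply Rmult_le_compat_l; lra).
  rewrite Hlen, !plus_INR. lra.
Qed.
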